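(* Let $L$ be a latin square of order $n$ on the symbols $\{1,\dots,n\}$ that has no transversal, and let $S\subseteq S_n$ be the set of its rows, regarded as permutations (the row with entries $l_1,\dots,l_n$ in columns $1,\dots,n$ being the permutation $i\mapsto l_i$). Then $\mathrm{cr}(S)=n-2$.
   Context: $S_n$ is the symmetric group on $\{1,\dots,n\}$ with the Hamming distance: the distance between $g,h\in S_n$ is the number of points $i$ with $g(i)\ne h(i)$. The covering radius $\mathrm{cr}(P)$ of a nonempty $P\subseteq S_n$ is the smallest $r$ such that every permutation in $S_n$ is at distance at most $r$ from some element of $P$. A latin square of order $n$ is an $n\times n$ array in which each symbol occurs exactly once in each row and column; a transversal is a set of $n$ cells, one from each row and one from each column, no two containing the same symbol. *)

(* Defs.v *)
From mathcomp Require Import all_boot all_order all_fingroup.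
Set Implicit Arguments. Unset Strict Implicit. Unset Printing Implicit Defensive.

(* Points {1..n} are represented by 'I_n = {0..n-1}; S_n is 'S_n. *)

Definition hdist n (g h : 'S_n) : nat := #|[set i : 'I_n | g i != h i]|.

Definition covers n (P : {set 'S_n}) (r : nat) : Prop :=
  forall g : 'S_n, exists2 h, h \in P & hdist g h <= r.

Definition is_covering_radius n (P : {set 'S_n}) (r : nat) : Prop :=
  covers P r /\ forall r', covers P r' -> r <= r'.

(* A latin square of order n: L r c is the symbol in row r, column c. *)
Definition latin_square n (L : 'I_n -> 'I_n -> 'I_n) : Prop :=
  (forall r, injective (L r)) /\ (forall c, injective (fun r => L r c)).

(* A transversal: n cells, one in each row and one in each column (i.e. cells
   (r, sigma r) for a bijection sigma from rows to columns), with pairwise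
   distinct symbols. *)
Definition has_transversal n (L : 'I_n -> 'I_n -> 'I_n) : Prop :=
  exists sigma : 'S_n, injective (fun r => L r (sigma r)).

Definition rows_set n (L : 'I_n -> 'I_n -> 'I_n) : {set 'S_n} :=
  [set s : 'S_n | [exists r : 'I_n, [forall i : 'I_n, s i == L r i]]].

(* Main.v *)
Require Import Defs.
From mathcomp Require Import all_boot all_order all_fingroup.
From Stdlib Require Import Classical.
Set Implicit Arguments. Unset Strict Implicit. Unset Printing Implicit Defensive.

Definition load n (a : 'I_n -> option 'I_n) (r : 'I_n) : nat := \sum_c (a c == Some r).
Definition asize n (a : 'I_n -> option 'I_n) : nat := \sum_c (a c != None).
Definition symU n (L : 'I_n -> 'I_n -> 'I_n) (a : 'I_n -> option 'I_n) : {set 'I_n} :=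
  [set s | [exists c, [exists r, (a c == Some r) && (L r c == s)]]].
Definition validA n (L : 'I_n -> 'I_n -> 'I_n) (a : 'I_n -> option 'I_n) : Prop :=
  (forall r, load a r <= 2) /\
  (forall c1 c2 r1 r2, a c1 = Some r1 -> a c2 = Some r2 -> L r1 c1 = L r2 c2 -> c1 = c2).
Definition upd n (a : 'I_n -> option 'I_n) (c : 'I_n) (x : option 'I_n) :=
  fun c' => if c' == c then x else a c'.

Lemma eqSome (T : eqType) (x y : T) : (Some x == Some y) = (x == y).
Proof. by []. Qed.

Lemma swap3 x s y : x + s + y = y + s + x.
Proof. by rewrite -addnA addnC (addnC s). Qed.

Lemma load_upd n (a : 'I_n -> option 'I_n) c x r :
  load (upd a c x) r + (a c == Some r) = load a r + (x == Some r).
Proof.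
rewrite /load (bigD1 c) //= [in RHS](bigD1 c) //= {1}/upd eqxx.
rewrite (eq_bigr (fun i => (a i == Some r) : nat)); last first.
  by move=> i /negbTE; rewrite /upd => ->.
exact: swap3.
Qed.

Lemma asize_upd n (a : 'I_n -> option 'I_n) c x :
  asize (upd a c x) + (a c != None) = asize a + (x != None).
Proof.
rewrite /asize (bigD1 c) //= [in RHS](bigD1 c) //= {1}/upd eqxx.
rewrite (eq_bigr (fun i => (a i != None) : nat)); last first.
  by move=> i /negbTE; rewrite /upd => ->.
exact: swap3.
Qed.

Lemma in_symU n (L : 'I_n -> 'I_n -> 'I_n) a c r : a c = Some r -> L r c \in symU L a.
Proof. move=> h; rewrite inE; apply/existsP; exists c; apply/existsP; exists r; by rewrite h !eqxx. Qed.

Lemma valid_upd n (L : 'I_n -> 'I_n -> 'I_n) a c r :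
  validA L a -> (forall r', load (upd a c (Some r)) r' <= 2) ->
  (forall c2 r2, c2 != c -> a c2 = Some r2 -> L r2 c2 != L r c) ->
  validA L (upd a c (Some r)).
Proof.
move=> [_ hv] hl hs; split=> // c1 c2 r1 r2; rewrite /upd.
case: (eqVneq c1 c) => [->|n1]; case: (eqVneq c2 c) => [->|n2] //.
- move=> [<-] h2 e; by move: (hs _ _ n2 h2); rewrite e eqxx.
- move=> h1 [<-] e; by move: (hs _ _ n1 h1); rewrite e eqxx.
- exact: hv.
Qed.

Lemma extA n (L : 'I_n -> 'I_n -> 'I_n) a c0 r :
  validA L a -> a c0 = None -> load a r < 2 -> L r c0 \notin symU L a ->
  exists a', validA L a' /\ asize a < asize a'.
Proof.
move=> hv h0 hl hs; exists (upd a c0 (Some r)); split; last first.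
  by have := asize_upd a c0 (Some r); rewrite h0 /= addn0 addn1 => ->.
apply: valid_upd => //.
  move=> r'; have := load_upd a c0 (Some r) r'; rewrite h0 eqSome /= addn0 => ->.
  by case: (eqVneq r r') => [<-|_]; rewrite ?addn1 ?addn0 //; case: hv.
move=> c2 r2 _ h2; apply/eqP => e; move: hs; by rewrite -e (in_symU L h2).
Qed.

Lemma extB n (L : 'I_n -> 'I_n -> 'I_n) (hr : forall r, injective (L r)) a c0 c' rho q p :
  validA L a -> a c0 = None -> a c' = Some rho -> load a q < 2 ->
  L q c' \notin symU L a -> L p c0 = L rho c' ->
  (if p == q then load a q == 0 else load a p < 2) ->
  exists a', validA L a' /\ asize a < asize a'.
Proof.
move=> hv h0 h' hq hs hp hc.
have nc : c0 != c' by apply/eqP=> e; move: h0; rewrite e h'.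
have npr : p != rho by apply/eqP=> e; move: hp; rewrite e => /hr; apply/eqP.
set a1 := upd a c' (Some q).
have l1 : forall r', load a1 r' <= load a r' + (q == r').
  by move=> r'; rewrite -eqSome -(load_upd a c') leq_addr.
have v1 : validA L a1.
  apply: valid_upd => //.
    move=> r'; apply: leq_trans (l1 r') _.
    by case: (eqVneq q r') => [<-|_]; rewrite ?addn1 ?addn0 //; case: hv.
  move=> c2 r2 _ h2; apply/eqP => e; move: hs; by rewrite -e (in_symU L h2).
have s1 : asize a1 = asize a.
  by apply/eqP; rewrite -(eqn_add2r (a c' != None)) asize_upd h'.
have h01 : a1 c0 = None by rewrite /a1 /upd (negbTE nc).
exists (upd a1 c0 (Some p)); split; last first.
  by have := asize_upd a1 c0 (Some p); rewrite h01 s1 /= addn0 addn1 => ->.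
apply: valid_upd => //.
  move=> r'; have := load_upd a1 c0 (Some p) r'; rewrite h01 eqSome /= addn0 => ->.
  case: (eqVneq p r') => [<-|npr']; last first.
    rewrite addn0; apply: leq_trans (l1 r') _.
    by case: (eqVneq q r') => [<-|_]; rewrite ?addn1 ?addn0 //; case: hv.
  have := load_upd a c' (Some q) p; rewrite h' !eqSome /= eq_sym (negbTE npr) addn0 -/a1 => ->.
  move: hc; case: (eqVneq p q) => [<- /eqP ->|_ hp2] //.
  by rewrite addn0 addn1.
move=> c2 r2 n2; rewrite /a1 /upd; case: (eqVneq c2 c') => [-> [<-]|n2' h2].
  apply/eqP => e; move: hs; by rewrite e hp (in_symU L h').
apply/eqP => e; rewrite hp in e; move: (proj2 hv _ _ _ _ h2 h' e).
by move/eqP; rewrite (negbTE n2').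
Qed.

Lemma sum_ind (T : finType) (P : pred T) : \sum_c (P c : nat) = #|[set c | P c]|.
Proof.
rewrite -sum1dep_card [RHS]big_mkcond /=; apply: eq_bigr => c _; by case: (P c).
Qed.

Lemma sum_eq1 (T : finType) (x : T) : \sum_y ((x == y) : nat) = 1.
Proof.
rewrite (bigD1 x) //= eqxx big1 // => y; by rewrite eq_sym => /negbTE ->.
Qed.

Lemma extend n (L : 'I_n -> 'I_n -> 'I_n) (hr : forall r, injective (L r))
  (hc : forall c, injective (fun r => L r c)) a :
  validA L a -> asize a < n -> exists a', validA L a' /\ asize a < asize a'.
Proof.
move=> hv hlt; apply: NNPP => hno.
have A : forall c0 r, a c0 = None -> load a r < 2 -> L r c0 \in symU L a.
  move=> c0 r h0 hl; case: (boolP (L r c0 \in symU L a)) => // hs.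
  by exfalso; apply: hno; exact: extA hv h0 hl hs.
have B : forall c0 c' rho q p, a c0 = None -> a c' = Some rho -> load a q < 2 ->
    L q c' \notin symU L a -> L p c0 = L rho c' ->
    (if p == q then load a q == 0 else load a p < 2) -> False.
  by move=> c0 c' rho q p h0 h' hq hs hp hc'; apply: hno; exact: (extB hr hv h0 h' hq hs hp hc').
have [c0 h0] : exists c0, a c0 = None.
  apply: NNPP => hn; suff e : asize a = n by move: hlt; rewrite e ltnn.
  transitivity (\sum_(c < n) 1); last by rewrite sum_nat_const card_ord muln1.
  apply: eq_bigr => c _; case E: (a c) => //; by exfalso; apply: hn; exists c.
set Uc := [set c | a c != None].
set t := asize a.
have tE : t = #|Uc| by rewrite /t /asize sum_ind.
pose sy c := if a c is Some r then L r c else c.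
have syinj : {in Uc &, injective sy}.
  move=> c1 c2; rewrite !inE /sy; case E1: (a c1) => [r1|] //; case E2: (a c2) => [r2|] // _ _.
  exact: (proj2 hv _ _ _ _ E1 E2).
have symE : symU L a = sy @: Uc.
  apply/setP => s; rewrite inE; apply/existsP/imsetP.
    move=> [c /existsP [r /andP [/eqP e /eqP <-]]]; exists c; first by rewrite inE e.
    by rewrite /sy e.
  move=> [c]; rewrite inE /sy; case E: (a c) => [r|] // _ ->.
  by exists c; apply/existsP; exists r; rewrite E !eqxx.
set S := symU L a.
set d := #|~: S|.
have dE : d + t = n by rewrite tE -(card_in_imset syinj) -symE addnC cardsC card_ord.
have d0 : 0 < d.
  move: dE hlt; rewrite -/t; case: (d) => // ; rewrite add0n => ->; by rewrite ltnn.
pose cap r := 2 - load a r.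
have capP : forall r, (0 < cap r) = (load a r < 2) by move=> r; rewrite subn_gt0.
set C := \sum_r cap r.
have sumload : \sum_r load a r = t.
  rewrite /load exchange_big /t /asize; apply: eq_bigr => c _.
  case: (a c) => [r0|]; last by rewrite big1.
  rewrite (eq_bigr (fun r => (r0 == r) : nat)) ?sum_eq1 // => r _; by rewrite eqSome.
have CE : C + t = 2 * n.
  rewrite -sumload /C -big_split /= (eq_bigr (fun _ => 2)).
    by rewrite sum_nat_const card_ord mulnC.
  move=> r _; rewrite subnK //; by case: hv.
pose alpha c' := \sum_p (L p c0 == sy c') * cap p.
pose beta c' := \sum_q (L q c' \notin S) * cap q.
have cnt : forall s, \sum_(c in Uc) ((s == sy c) : nat) = (s \in S).
  move=> s; rewrite /S symE; case: (boolP (s \in sy @: Uc)).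
    move=> /imsetP [c1 c1U ->]; rewrite (bigD1 c1) //= eqxx big1 // => c /andP [cU nc].
    by case: (eqVneq (sy c1) (sy c)) => // /(syinj _ _ c1U cU) e; move: nc; rewrite e eqxx.
  move=> ns; rewrite big1 // => c cU; case: (eqVneq s (sy c)) => // e.
  by move: ns; rewrite e imset_f.
have sumA : \sum_(c in Uc) alpha c = C.
  rewrite /alpha exchange_big /C; apply: eq_bigr => p _.
  rewrite -big_distrl /= cnt.
  case: (posnP (cap p)) => [->|]; first by rewrite muln0.
  by rewrite capP => /(A _ _ h0) ->; rewrite mul1n.
have cardF : forall c', #|[set q | L q c' \notin S]| = d.
  move=> c'; rewrite /d -(card_preimset (~: S) (hc c')).
  by apply: eq_card => q; rewrite !inE.
have cardF2 : forall q, #|[set c' | L q c' \notin S]| = d.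
  move=> q; rewrite /d -(card_preimset (~: S) (hr q)).
  by apply: eq_card => c'; rewrite !inE.
have sumB : \sum_(c in Uc) beta c = d * C.
  rewrite /beta exchange_big /C big_distrr; apply: eq_bigr => q _ /=.
  rewrite -big_distrl /=.
  case: (posnP (cap q)) => [->|]; first by rewrite !muln0.
  rewrite capP => hq; congr (_ * _).
  rewrite -(cardF2 q) -sum_ind big_mkcond; apply: eq_bigr => c _.
  rewrite inE; case: (boolP (a c != None)) => // /negPn /eqP hN.
  by rewrite (A _ _ hN hq).
have percol : forall c', c' \in Uc -> d * alpha c' + beta c' <= 2 * d.
  move=> c'; rewrite inE; case E: (a c') => [rho|] // _.
  have syc : sy c' = L rho c' by rewrite /sy E.
  set p0 := invF (hc c0) (L rho c').
  have hp0 : L p0 c0 = L rho c' by rewrite /p0 (f_invF (hc c0)).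
  have alE : alpha c' = cap p0.
    rewrite /alpha (bigD1 p0) //= syc hp0 eqxx mul1n big1 ?addn0 // => p np.
    case: (eqVneq (L p c0) (L rho c')) => [e|]; last by rewrite mul0n.
    by move: np; rewrite -hp0 in e; rewrite (hc c0 _ _ e) eqxx.
  have caple : forall r, cap r <= 2 by move=> r; rewrite leq_subr.
  have beta2 : beta c' <= 2 * d.
    rewrite /beta -(cardF c') -sum_ind big_distrr /=; apply: leq_sum => q _.
    by rewrite mulnC leq_mul2r caple orbT.
  rewrite alE; case: (posnP (cap p0)) => [->|cp]; first by rewrite muln0.
  case: (posnP (beta c')) => [->|bp].
    by rewrite addn0 mulnC leq_mul2r caple orbT.
  have [q /andP [hq1 hq2]] : exists q, (L q c' \notin S) && (0 < cap q).
    apply: NNPP => hn; move: bp; rewrite /beta big1 // => q _.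
    case: (boolP (L q c' \notin S)) => hs; last by rewrite mul0n.
    case: (posnP (cap q)) => [->|hcq]; first by rewrite muln0.
    by exfalso; apply: hn; exists q; rewrite hs hcq.
  rewrite capP in hq2; rewrite capP in cp.
  case: (eqVneq p0 q) => [epq|npq]; last first.
    by exfalso; apply: (B _ _ _ _ _ h0 E hq2 hq1 hp0); rewrite (negbTE npq).
  have lq : load a q = 1.
    case: (eqVneq (load a q) 0) => [e|ne].
      by exfalso; apply: (B _ _ _ _ _ h0 E hq2 hq1 hp0); rewrite epq eqxx e.
    by move: hq2 ne; case: (load a q) => [|[|]].
  have capq : cap q = 1 by rewrite /cap lq.
  have betaE : beta c' = 1.
    rewrite /beta (bigD1 q) //= hq1 capq big1 // => q' nq'.
    case: (boolP (L q' c' \notin S)) => hs; last by rewrite mul0n.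
    case: (posnP (cap q')) => [->|hcq]; first by rewrite muln0.
    rewrite capP in hcq; exfalso.
    apply: (B _ _ _ _ _ h0 E hcq hs hp0); rewrite epq eq_sym (negbTE nq').
    by rewrite -epq.
  by rewrite betaE epq capq muln1 mul2n -addnn leq_add2l.
have tot : d * C + d * C <= t * (2 * d).
  have h : \sum_(c in Uc) (d * alpha c + beta c) <= \sum_(c in Uc) (2 * d).
    by apply: leq_sum => c cU; exact: percol.
  by move: h; rewrite big_split /= -big_distrr sumA sumB sum_nat_const tE.
have : C <= t.
  by move: tot; rewrite addnn -mul2n mulnA [t * _]mulnC leq_pmul2l // muln_gt0 d0.
move=> Ct; move: hlt; rewrite -/t ltnNge; apply/negP/negPn.
have : 2 * n <= 2 * t by rewrite -CE mul2n -addnn leq_add2r.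
by rewrite leq_pmul2l.
Qed.

Lemma full n (L : 'I_n -> 'I_n -> 'I_n) (hr : forall r, injective (L r))
  (hc : forall c, injective (fun r => L r c)) :
  exists a, validA L a /\ forall c, a c != None.
Proof.
have step : forall k, k <= n -> exists a, validA L a /\ k <= asize a.
  elim=> [_|k IH hk].
    exists (fun _ => None); split => //; split => // r.
    by rewrite /load big1.
  have [a [va ka]] := IH (ltnW hk).
  case: (ltnP k (asize a)) => [lt|le]; first by exists a.
  have ea : asize a = k by apply/eqP; rewrite eqn_leq le ka.
  have lt : asize a < n by rewrite ea.
  have [a' [va' la']] := extend hr hc va lt.
  by exists a'; split => //; rewrite -ea.
have [a [va ha]] := step n (leqnn n).
exists a; split => // c.
have : [set c | a c != None] = setT.
  apply/eqP; rewrite eqEcard subsetT cardsT card_ord -sum_ind.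
  exact: ha.
by move/setP/(_ c); rewrite !inE.
Qed.

Theorem theorem6p4 (n : nat) (L : 'I_n -> 'I_n -> 'I_n) :
  latin_square L -> ~ has_transversal L ->
  is_covering_radius (rows_set L) (n - 2).
Proof.
move=> [hr hc] hnt.
have n2 : 1 < n.
  rewrite ltnNge; apply/negP => hn; apply: hnt; exists 1%g => r1 r2 _.
  have h1 : val r1 = 0 by apply/eqP; rewrite -leqn0 -ltnS (leq_trans (ltn_ord r1) hn).
  have h2 : val r2 = 0 by apply/eqP; rewrite -leqn0 -ltnS (leq_trans (ltn_ord r2) hn).
  by apply: val_inj; rewrite h1 h2.
pose hrow r := perm (hr r).
have hrowE : forall r i, hrow r i = L r i by move=> r i; rewrite permE.
have hrowin : forall r, hrow r \in rows_set L.
  move=> r; rewrite inE; apply/existsP; exists r; apply/forallP => i; by rewrite hrowE.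
have inrows : forall h, h \in rows_set L -> exists r, forall i, h i = L r i.
  move=> h; rewrite inE => /existsP [r /forallP hh]; exists r => i; exact/eqP.
split.
  move=> g; pose rho c := invF (hc c) (g c).
  have rhoE : forall c, L (rho c) c = g c by move=> c; rewrite /rho (f_invF (hc c)).
  case: (boolP (injectiveb rho)) => [/injectiveP rinj|/injectivePn [c1 [c2 nc e]]].
    exfalso; apply: hnt; pose sp := perm rinj.
    have key : forall r, L r (sp^-1 r)%g = g ((sp^-1)%g r).
      move=> r; rewrite -rhoE; congr (L _ _).
      by rewrite -{1}(permKV sp r) permE.
    exists (sp^-1)%g => r1 r2 /=; rewrite !key => /perm_inj/perm_inj //.
  exists (hrow (rho c1)); first exact: hrowin.
  rewrite /hdist.
  have sub : [set i | g i != hrow (rho c1) i] \subset ~: [set c1; c2].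
    apply/subsetP => i; rewrite !inE hrowE; apply: contraNN => /orP [] /eqP ->.
      by rewrite rhoE.
    by rewrite e rhoE.
  apply: leq_trans (subset_leq_card sub) _.
  by rewrite cardsCs setCK cards2 nc card_ord.
move=> r' hcov.
have [a [va ha]] := full hr hc.
pose rowf c := odflt c (a c).
have aE : forall c, a c = Some (rowf c).
  by move=> c; rewrite /rowf; move: (ha c); case: (a c).
pose g c := L (rowf c) c.
have ginj : injective g.
  move=> c1 c2; exact: (proj2 va _ _ _ _ (aE c1) (aE c2)).
have [h hin hd] := hcov (perm ginj).
have [r hE] := inrows h hin.
apply: leq_trans hd; rewrite /hdist.
have eqset : [set i | perm ginj i != h i] = ~: [set c | a c == Some r].
  apply/setP => i; rewrite !inE permE hE aE eqSome /g.
  by rewrite (inj_eq (hc i)).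
rewrite eqset cardsCs setCK card_ord leq_sub2l //.
by rewrite -(sum_ind (fun c => a c == Some r)); exact: (proj1 va r).
Qed.
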